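(* Let $N\ge 1$ be an integer, let $\gamma>0$, $\upsilon\in(0,1]$, $P_b>0$, $h>0$, $T>0$, and let $p_1>p_2>\cdots>p_N>0$ with $p_1\le1$. Consider Problem P2: minimize $\sum_{k=1}^N \gamma p_k f_k^2$ over $(f_1,\dots,f_N,y_1,\dots,y_N)$ subject to $\sum_{k=1}^m \gamma f_k^2 \le \upsilon P_b h \sum_{k=1}^m y_k$ for $m=1,\dots,N$, $\sum_{k=1}^N y_k\le T$, and $f_k>0$, $\frac{1}{f_k}-y_k\le 0$ for all $k$; Problem P3: the same problem with the first $N-1$ energy harvesting constraints removed, i.e. minimize $\sum_{k=1}^N \gamma p_k f_k^2$ subject to $\sum_{k=1}^N \gamma f_k^2 \le \upsilon P_b h \sum_{k=1}^N y_k$, $\sum_{k=1}^N y_k\le T$, and $f_k>0$, $\frac{1}{f_k}-y_k\le 0$ for all $k$. Then the solution of Problem P2 can be obtained by solving Problem P3: an optimal solution of P3 is an optimal solution of P2.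
   Context: $f_k$ is the CPU frequency of the $k$-th cycle, $p_k$ the probability that the $k$-th cycle is executed (decreasing in $k$), $\gamma f^2$ the energy per cycle at frequency $f$, $\upsilon P_b h$ the harvested power and $T$ the deadline. *)

(* Defs.v *)
(* Cycles are indexed by k : 'I_N (0-based: ordinal k is cycle k+1). *)
From mathcomp Require Import all_boot all_order all_algebra.
Set Implicit Arguments. Unset Strict Implicit. Unset Printing Implicit Defensive.
Import Order.TTheory GRing.Theory Num.Theory.
Local Open Scope ring_scope.

Definition energy_obj (R : realFieldType) (N : nat) (gamma : R) (p f : 'I_N -> R) : R :=
  \sum_(k < N) gamma * p k * f k ^+ 2.

Definition common_constr (R : realFieldType) (N : nat) (T : R) (f y : 'I_N -> R) : Prop :=
  \sum_(k < N) y k <= T /\ (forall k : 'I_N, 0 < f k /\ (f k)^-1 - y k <= 0).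

Definition feasible_P2 (R : realFieldType) (N : nat) (gamma ups Pb h T : R)
    (f y : 'I_N -> R) : Prop :=
  (forall m : 'I_N,
      \sum_(k < N | (k <= m)%N) gamma * f k ^+ 2
        <= ups * Pb * h * \sum_(k < N | (k <= m)%N) y k)
  /\ common_constr T f y.

Definition feasible_P3 (R : realFieldType) (N : nat) (gamma ups Pb h T : R)
    (f y : 'I_N -> R) : Prop :=
  \sum_(k < N) gamma * f k ^+ 2 <= ups * Pb * h * \sum_(k < N) y k
  /\ common_constr T f y.

Definition optimal_P2 (R : realFieldType) (N : nat) (gamma ups Pb h T : R)
    (p f y : 'I_N -> R) : Prop :=
  feasible_P2 gamma ups Pb h T f y /\
  forall f' y' : 'I_N -> R, feasible_P2 gamma ups Pb h T f' y' ->
    energy_obj gamma p f <= energy_obj gamma p f'.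

Definition optimal_P3 (R : realFieldType) (N : nat) (gamma ups Pb h T : R)
    (p f y : 'I_N -> R) : Prop :=
  feasible_P3 gamma ups Pb h T f y /\
  forall f' y' : 'I_N -> R, feasible_P3 gamma ups Pb h T f' y' ->
    energy_obj gamma p f <= energy_obj gamma p f'.

(* Main.v *)
Require Import Defs.
From mathcomp Require Import all_boot all_order all_algebra all_fingroup.
From mathcomp Require Import ring lra.
Import Order.TTheory GRing.Theory Num.Theory.
Local Open Scope ring_scope.

Lemma sum2 (R : realFieldType) (N : nat) (g : 'I_N -> R) (i j : 'I_N) :
  i != j ->
  \sum_(k < N) g k = g i + g j + \sum_(k < N | (k != i) && (k != j)) g k.
Proof.
move=> nij; rewrite (bigD1 i) //= (bigD1 j) /=; last by rewrite eq_sym.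
by rewrite addrA.
Qed.
Arguments sum2 {R N} g {i j}.

Section S.
Variables (R : realFieldType) (N : nat) (gamma ups Pb h T : R) (p : 'I_N -> R).
Hypothesis gpos : 0 < gamma.
Hypothesis pdec : forall i j : 'I_N, (i < j)%N -> p j < p i.
Hypothesis ppos : forall k : 'I_N, 0 < p k.
Variables f y : 'I_N -> R.
Hypothesis opt : optimal_P3 gamma ups Pb h T p f y.

Lemma ytight k : y k = (f k)^-1.
Proof.
case: opt => [[Hen [HT Hc]] Hopt].
have [fk0 yk] := Hc k.
have fkinv : 0 < (f k)^-1 by rewrite invr_gt0.
case: (ltrgtP (y k) (f k)^-1) => // [Hlt|Hgt]; first by exfalso; lra.
have yk0 : 0 < y k by lra.
pose f' := fun l => if l == k then (y k)^-1 else f l.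
have f'k : f' k = (y k)^-1 by rewrite /f' eqxx.
have f'o : forall l, l != k -> f' l = f l by move=> l /negPf; rewrite /f' => ->.
have lt1 : (y k)^-1 < f k.
  by rewrite -[f k]invrK ltf_pV2 // posrE.
have yinv0 : 0 < (y k)^-1 by rewrite invr_gt0.
have sq : (y k)^-1 ^+ 2 < f k ^+ 2.
  by rewrite ltr_pXn2r // nnegrE ltW.
have feas : feasible_P3 gamma ups Pb h T f' y.
  split; last split => //.
  - apply: le_trans Hen; apply: ler_sum => l _.
    case: (eqVneq l k) => [->|nl]; last by rewrite f'o.
    by rewrite f'k ler_wpM2l ?ltW.
  - move=> l; case: (eqVneq l k) => [->|nl]; last by rewrite f'o //; exact: (Hc l).
    by rewrite f'k invrK subrr.
have := Hopt _ _ feas; rewrite /energy_obj (bigD1 k) //= [X in _ <= X](bigD1 k) //=.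
rewrite f'k.
have -> : \sum_(i < N | i != k) gamma * p i * f' i ^+ 2 =
          \sum_(i < N | i != k) gamma * p i * f i ^+ 2.
  by apply: eq_bigr => l nl; rewrite f'o.
have : gamma * p k * (y k)^-1 ^+ 2 < gamma * p k * f k ^+ 2.
  by rewrite ltr_pM2l // mulr_gt0.
lra.
Qed.

Lemma fmono (i j : 'I_N) : (i <= j)%N -> f i <= f j.
Proof.
rewrite leq_eqVlt => /orP [/eqP Hij|Hij].
  by have -> : i = j by apply: val_inj.
case: opt => [[Hen [HT Hc]] Hopt].
have nij : i != j by rewrite -(inj_eq val_inj) /= neq_ltn Hij.
rewrite leNgt; apply/negP => Hlt.
pose s := tperm i j.
pose f' := fun k => f (s k).
pose y' := fun k => y (s k).
have inj : injective s by apply: perm_inj.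
have feas : feasible_P3 gamma ups Pb h T f' y'.
  split; last split.
  - rewrite (reindex_inj inj) [X in _ <= _ * X](reindex_inj inj) /= in Hen.
    exact: Hen.
  - by rewrite (reindex_inj inj) in HT.
  - by move=> k; exact: (Hc (s k)).
have := Hopt _ _ feas; rewrite /energy_obj (sum2 _ nij) [X in _ <= X](sum2 _ nij).
rewrite /f' /s tpermL tpermR.
have -> : \sum_(k < N | (k != i) && (k != j)) gamma * p k * f (tperm i j k) ^+ 2 =
          \sum_(k < N | (k != i) && (k != j)) gamma * p k * f k ^+ 2.
  by apply: eq_bigr => k /andP [ki kj]; rewrite tpermD // eq_sym.
have pij := pdec _ _ Hij.
have [fj0 _] := Hc j.
have sq : f j ^+ 2 < f i ^+ 2 by rewrite ltr_pXn2r // nnegrE ltW // (lt_trans fj0).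
have : 0 < gamma * (p i - p j) * (f i ^+ 2 - f j ^+ 2).
  by rewrite !mulr_gt0 // subr_gt0.
move=> H1 H2.
have E : gamma * p i * f j ^+ 2 + gamma * p j * f i ^+ 2 -
         (gamma * p i * f i ^+ 2 + gamma * p j * f j ^+ 2) =
         - (gamma * (p i - p j) * (f i ^+ 2 - f j ^+ 2)) by ring.
lra.
Qed.

End S.
Arguments ytight {R N gamma ups Pb h T p} gpos ppos {f y} opt k.
Arguments fmono {R N gamma ups Pb h T p} gpos pdec {f y} opt {i j} _.

Theorem lemma3 (R : realFieldType) (N : nat) (gamma ups Pb h T : R)
    (p : 'I_N -> R) :
  (1 <= N)%N ->
  0 < gamma -> 0 < ups -> ups <= 1 -> 0 < Pb -> 0 < h -> 0 < T ->
  (forall i j : 'I_N, (i < j)%N -> p j < p i) ->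
  (forall k : 'I_N, 0 < p k) ->
  (forall k : 'I_N, nat_of_ord k = 0%N -> p k <= 1) ->
  forall f y : 'I_N -> R,
    optimal_P3 gamma ups Pb h T p f y -> optimal_P2 gamma ups Pb h T p f y.
Proof.
move=> N1 gpos _ _ _ _ _ pdec ppos _ f y opt.
have yt := ytight gpos ppos opt.
have fm := fmono gpos pdec opt.
have opt' := opt.
case: opt' => [[Hen Hcom] Hopt].
have fpos k : 0 < f k by case: Hcom => _ /(_ k) [].
split; last first.
  move=> f' y' [H2 Hc']; apply: Hopt; split; last exact: Hc'.
  have lt : (N.-1 < N)%N by rewrite ltn_predL.
  have := H2 (Ordinal lt).
  have E : forall F : 'I_N -> R, \sum_(k < N | (k <= Ordinal lt)%N) F k = \sum_(k < N) F k.
    by move=> F; apply: eq_bigl => k; rewrite /= -ltnS prednK // ltn_ord.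
  rewrite !E. move=> H; exact: H.
split => //.
move=> m.
set c := ups * Pb * h.
set a := gamma * f m ^+ 3.
have key : forall k, gamma * f k ^+ 2 = gamma * f k ^+ 3 * y k.
  move=> k; rewrite yt; field.
  by rewrite gt_eqF.
have y0 : forall k, 0 <= y k by move=> k; rewrite yt invr_ge0 ltW.
have Hle : forall k : 'I_N, (k <= m)%N -> gamma * f k ^+ 2 <= a * y k.
  move=> k km; rewrite key; apply: ler_wpM2r; first exact: y0.
  apply: ler_wpM2l; first exact: ltW.
  by rewrite ler_pXn2r ?nnegrE ?(ltW (fpos _)) //; apply: fm.
have Hge : forall k : 'I_N, ~~ (k <= m)%N -> a * y k <= gamma * f k ^+ 2.
  move=> k km; rewrite key; apply: ler_wpM2r; first exact: y0.
  apply: ler_wpM2l; first exact: ltW.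
  by rewrite ler_pXn2r ?nnegrE ?(ltW (fpos _)) //; apply: fm; rewrite ltnW // ltnNge.
have S1 : \sum_(k < N | (k <= m)%N) gamma * f k ^+ 2 <= a * \sum_(k < N | (k <= m)%N) y k.
  by rewrite mulr_sumr; apply: ler_sum.
have S2 : a * \sum_(k < N | ~~ (k <= m)%N) y k <= \sum_(k < N | ~~ (k <= m)%N) gamma * f k ^+ 2.
  by rewrite mulr_sumr; apply: ler_sum.
have Y2 : 0 <= \sum_(k < N | ~~ (k <= m)%N) y k.
  by apply: sumr_ge0 => k _; rewrite yt invr_ge0 ltW.
have SF : \sum_(k < N) gamma * f k ^+ 2 = \sum_(k < N | (k <= m)%N) gamma * f k ^+ 2 + \sum_(k < N | ~~ (k <= m)%N) gamma * f k ^+ 2.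
  by rewrite (bigID (fun k : 'I_N => (k <= m)%N)).
have YF : \sum_(k < N) y k = \sum_(k < N | (k <= m)%N) y k + \sum_(k < N | ~~ (k <= m)%N) y k.
  by rewrite (bigID (fun k : 'I_N => (k <= m)%N)).
rewrite -/c in Hen.
move: Hen; rewrite SF YF.
case: (lerP a c) => Hac Hen.
  apply: le_trans S1 _; rewrite ler_wpM2r //.
  by apply: sumr_ge0 => k _; rewrite yt invr_ge0 ltW.
have : c * \sum_(k < N | ~~ (k <= m)%N) y k <= a * \sum_(k < N | ~~ (k <= m)%N) y k.
  by rewrite ler_wpM2r // ltW.
rewrite mulrDr in Hen.
lra.
Qed.
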